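(* Let $d, p \in \mathbb{N}$ be given. There exists an increasing function $g: \mathbb{N} \rightarrow \mathbb{N}$ such that, if $\zeta_{d, p}: \mathbb{N} \times \mathbb{N} \rightarrow \mathbb{N}$ is the function $\zeta_{d, p}(n_1, n_2) = \mathsf{tower}(n_2, g(d) \cdot (n_1 + 1) \cdot (n_1 + \log p))$, then the following are true for each $m \in \mathbb{N}_+$. (1) For every tree $t \in \mathcal{T}_{d, p}$, there exists a leaf-hereditary subtree $t'$ of $t$ such that: (i) the heights of $t'$ and $t$ are the same; (ii) $|t'|$ is at most $\zeta_{d, p}(m, d)$; and (iii) $t' \equiv_{\mathrm{MSO}[m]} t$. (2) The index of the $\equiv_{\mathrm{MSO}[m]}$ relation over $\mathcal{T}_{d, p}$ is at most $\zeta_{d, p}(m, d+1)$ if $d \ge 1$, and is $p$ if $d = 0$.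
   Context: A $p$-labeled rooted tree is a structure over the vocabulary $\{E, \mathsf{root}, P_1,\dots,P_p\}$ such that the $E$-reduct is a (possibly infinite) tree, $\mathsf{root}$ is interpreted as a single node (the root), and the sets $P_1,\dots,P_p$ partition the nodes (some may be empty). The height of a tree is the maximum root-to-leaf distance. $\mathcal{T}_{d,p}$ is the class of all (finite or infinite) $p$-labeled rooted trees of height at most $d$. A tree $t_2$ is a leaf-hereditary subtree of $t_1$ if $t_2$ and $t_1$ have the same root, $t_2$ is a substructure of $t_1$, and every leaf of $t_2$ is a leaf of $t_1$ (equivalently, $t_2$ is obtained from $t_1$ by deleting the subtrees rooted at some set of nodes). $|t|$ is the number of nodes. $A \equiv_{\mathrm{MSO}[m]} B$ means $A$ and $B$ satisfy the same monadic second-order sentences of quantifier rank at most $m$; the index over a class is the number of equivalence classes among structures of the class. $\mathsf{tower}(0,n)=n$, $\mathsf{tower}(k,n)=2^{\mathsf{tower}(k-1,n)}$. *)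

(* Defs.v *)
From Stdlib Require List.
From mathcomp Require Import all_boot.
Set Implicit Arguments. Unset Strict Implicit. Unset Printing Implicit Defensive.

(* vocabulary {E, root, P_1..P_p}: E binary (directed, parent -> child),
   root a constant, labelling lab : V -> 'I_p encodes the partition P_1..P_p *)
Record lstruct (p : nat) := LStruct {
  V : Type;
  E : V -> V -> Prop;
  root : V;
  lab : V -> 'I_p
}.
Arguments LStruct {p}.
Arguments V {p}. Arguments E {p}. Arguments root {p}. Arguments lab {p}.

Inductive reach (p : nat) (t : lstruct p) : nat -> V t -> V t -> Prop :=
| reach0 u : @reach p t 0 u u
| reachS k u w v : E t u w -> @reach p t k w v -> @reach p t k.+1 u v.
Arguments reach {p}.

Definition in_T (d p : nat) (t : lstruct p) : Prop :=
  (forall v, ~ E t v (root t)) /\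
  (forall v, v <> root t -> exists u, E t u v /\ forall u', E t u' v -> u' = u) /\
  (forall v, exists k, k <= d /\ reach t k (root t) v).

Definition has_height {p} (t : lstruct p) (h : nat) : Prop :=
  (exists v, reach t h (root t) v) /\
  (forall k v, reach t k (root t) v -> k <= h).

Definition card_le {p} (t : lstruct p) (N : nat) : Prop :=
  exists l : seq (V t), size l <= N /\ forall v, List.In v l.

(* t2 is a leaf-hereditary subtree of t1 (up to isomorphism): t2 embeds into t1
   as an induced substructure (E, root, labels preserved and reflected), and
   every leaf of t2 is mapped to a leaf of t1. *)
Definition leaf_hereditary_subtree {p} (t2 t1 : lstruct p) : Prop :=
  exists h : V t2 -> V t1,
    (forall x y, h x = h y -> x = y) /\
    (forall x y, E t2 x y <-> E t1 (h x) (h y)) /\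
    h (root t2) = root t1 /\
    (forall x, lab t2 x = lab t1 (h x)) /\
    (forall x, (forall y, ~ E t2 x y) -> forall z, ~ E t1 (h x) z).

Inductive term := TVar of nat | TRoot.

Inductive formula (p : nat) :=
| FE of term & term
| FEq of term & term
| FP of 'I_p & term
| FIn of term & nat
| FNot of formula p
| FOr of formula p & formula p
| FEx1 of nat & formula p
| FExS of nat & formula p.

Arguments FE {p}. Arguments FEq {p}. Arguments FIn {p}.

Fixpoint qrank {p} (f : formula p) : nat :=
  match f with
  | FNot g => qrank g
  | FOr g h => maxn (qrank g) (qrank h)
  | FEx1 _ g => (qrank g).+1
  | FExS _ g => (qrank g).+1
  | _ => 0
  end.

Definition tvars (s : term) : seq nat := if s is TVar n then [:: n] else [::].

Fixpoint fv1 {p} (f : formula p) : seq nat :=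
  match f with
  | FE s u | FEq s u => tvars s ++ tvars u
  | FP _ s | FIn s _ => tvars s
  | FNot g => fv1 g
  | FOr g h => fv1 g ++ fv1 h
  | FEx1 x g => filter (fun y => y != x) (fv1 g)
  | FExS _ g => fv1 g
  end.

Fixpoint fvS {p} (f : formula p) : seq nat :=
  match f with
  | FIn _ X => [:: X]
  | FNot g => fvS g
  | FOr g h => fvS g ++ fvS h
  | FEx1 _ g => fvS g
  | FExS X g => filter (fun Y => Y != X) (fvS g)
  | _ => [::]
  end.

Definition sentence {p} (f : formula p) : Prop := fv1 f = [::] /\ fvS f = [::].

Definition teval {p} (t : lstruct p) (rho : nat -> V t) (s : term) : V t :=
  if s is TVar n then rho n else root t.

Fixpoint sat {p} (t : lstruct p) (rho : nat -> V t) (sig : nat -> V t -> Prop)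
    (f : formula p) : Prop :=
  match f with
  | FE s u => E t (teval rho s) (teval rho u)
  | FEq s u => teval rho s = teval rho u
  | FP i s => lab t (teval rho s) = i
  | FIn s X => sig X (teval rho s)
  | FNot g => ~ sat rho sig g
  | FOr g h => sat rho sig g \/ sat rho sig h
  | FEx1 x g => exists v : V t, sat (fun y => if y == x then v else rho y) sig g
  | FExS X g => exists S : V t -> Prop,
                  sat rho (fun Y => if Y == X then S else sig Y) g
  end.

(* satisfaction of a sentence (assignment irrelevant; use a default one) *)
Definition models {p} (t : lstruct p) (f : formula p) : Prop :=
  sat (fun _ => root t) (fun _ _ => False) f.

Definition mso_equiv (m : nat) {p} (A B : lstruct p) : Prop :=
  forall f : formula p, sentence f -> qrank f <= m -> (models A f <-> models B f).

(* index of \equiv_{MSO[m]} over T_{d,p} is at most N: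
   among any N+1 trees of T_{d,p}, two are equivalent *)
Definition index_le (m d p N : nat) : Prop :=
  forall f : 'I_N.+1 -> lstruct p, (forall i, @in_T d p (f i)) ->
    exists i j, i != j /\ mso_equiv m (f i) (f j).

Definition index_ge (m d p N : nat) : Prop :=
  exists f : 'I_N -> lstruct p, (forall i, @in_T d p (f i)) /\
    forall i j, i != j -> ~ mso_equiv m (f i) (f j).

Fixpoint tower (k n : nat) : nat :=
  if k is k'.+1 then 2 ^ tower k' n else n.

(* zeta_{d,p}(n1,n2) = tower(n2, g(d) * (n1+1) * (n1 + log p)), log = ceil log2 *)
Definition zeta (g : nat -> nat) (d p n1 n2 : nat) : nat :=
  tower n2 (g d * n1.+1 * (n1 + up_log 2 p)).

(* Main.v *)
Require Import Defs.
From Stdlib Require Import ClassicalEpsilon.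
From Stdlib Require List.
From mathcomp Require Import all_boot.
From mathcomp Require Import zify.
Import Defs.
Set Implicit Arguments. Unset Strict Implicit. Unset Printing Implicit Defensive.

Definition pb (P : Prop) : bool := if excluded_middle_informative P then true else false.
Lemma pbP P : reflect P (pb P).
Proof. rewrite /pb; case: excluded_middle_informative => h; constructor; done. Qed.
Lemma pb_iff (P Q : Prop) : (P <-> Q) -> pb P = pb Q.
Proof. move=> [h1 h2]; case: (pbP P) => a; case: (pbP Q) => b //; tauto. Qed.

Definition atleast {V : Type} n (A : V -> Prop) :=
  exists e : 'I_n -> V, injective e /\ forall i, A (e i).

Fixpoint tc {V : Type} (k : nat) (A : V -> Prop) : nat :=
  if k is k'.+1 then (if pb (atleast k A) then k else tc k' A) else 0.

Section TC.
Variable V : Type.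
Implicit Types A B : V -> Prop.

Lemma atleast0 A : atleast 0 A.
Proof. exists (fun i : 'I_0 => match (notF (ltn_ord i)) with end); split.
 by move=> [] //. by move=> [] //. Qed.

Lemma atleast_le A n k : k <= n -> atleast n A -> atleast k A.
Proof.
move=> kn [e [ie Ae]]; exists (fun i : 'I_k => e (widen_ord kn i)); split => //.
move=> i j /= /ie /(congr1 val) /= ij; exact: val_inj.
Qed.

Lemma atleast_ext A B n : (forall z, A z -> B z) -> atleast n A -> atleast n B.
Proof. move=> AB [e [ie Ae]]; exists e; split => // i; exact: AB. Qed.

Lemma tc_le k A : tc k A <= k.
Proof. elim: k => //= k IH; case: pbP => // _; exact: leqW. Qed.

Lemma tc_atleast k A : atleast (tc k A) A.
Proof. elim: k => [|k IH] /=; first exact: atleast0. by case: pbP. Qed.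

Lemma tc_ge k A n : n <= k -> atleast n A -> n <= tc k A.
Proof.
elim: k => [|k IH] /=; first by rewrite leqn0 => /eqP ->.
case: pbP => // nk nle hn; apply: IH => //.
rewrite leq_eqVlt in nle; case/orP: nle => [/eqP en|] //; by subst n.
Qed.

Lemma tc_min k A n : atleast n A -> minn n k <= tc k A.
Proof. move=> h; apply: tc_ge; first exact: geq_minr.
apply: atleast_le h; exact: geq_minl. Qed.

Lemma tc_small k A n : tc k A < k -> atleast n A -> n <= tc k A.
Proof. move=> lt h; have := tc_min k h; lia. Qed.

Lemma tc_eq k A n : n <= k -> atleast n A -> (n < k -> ~ atleast n.+1 A) -> tc k A = n.
Proof.
move=> nk hn hn1; apply/eqP; rewrite eqn_leq tc_ge // andbT.
case: (ltnP n (tc k A)) => // lt.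
have h1 : n < k by apply: leq_trans lt (tc_le _ _).
exfalso; apply: (hn1 h1); apply: atleast_le lt _; exact: tc_atleast.
Qed.

Lemma tc_ext k A B : (forall z, A z <-> B z) -> tc k A = tc k B.
Proof.
move=> AB; apply: tc_eq; [exact: tc_le| |].
 apply: (atleast_ext _ (tc_atleast k B)) => z; by case: (AB z).
move=> lt h; have := tc_small lt (atleast_ext (fun z => proj1 (AB z)) h). by rewrite ltnn.
Qed.

Lemma atleast_img (I : finType) (e : I -> V) (J : pred I) :
  injective e -> atleast #|J| (fun z => exists2 i, J i & e i = z).
Proof.
move=> ie; exists (fun k => e (enum_val k)); split.
 by move=> a b /ie /enum_val_inj.
move=> k; exists (enum_val k) => //; exact: enum_valP.
Qed.

Lemma atleast_img_le (I : finType) (e : I -> V) (J : pred I) n :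
  atleast n (fun z => exists2 i, J i & e i = z) -> n <= #|J|.
Proof.
move=> [f [fi fA]].
have : forall k, {i | J i & e i = f k}.
  move=> k; have : exists i, J i /\ e i = f k by case: (fA k) => i Ji ei; exists i.
  move=> /constructive_indefinite_description [x [Jx ex]]. by exists x.
move=> ch; pose h k := sval (ch k).
have hi : injective h.
  move=> a b hab; apply: fi. rewrite -(s2valP' (ch a)) -(s2valP' (ch b)). by congr e.
have : #|'I_n| <= #|J|.
  rewrite -(card_imset (mem 'I_n) hi) /=. 
  apply: subset_leq_card; apply/subsetP => x /imsetP [k _ ->]; exact: (s2valP (ch k)).
by rewrite card_ord.
Qed.

Lemma tc_img k (I : finType) (e : I -> V) (J : pred I) A :
  injective e -> (forall z, A z <-> exists2 i, J i & e i = z) -> tc k A = minn k #|J|.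
Proof.
move=> ie hA; rewrite (tc_ext k hA); apply: tc_eq; first exact: geq_minl.
 apply: atleast_le (atleast_img J ie); exact: geq_minr.
move=> lt /atleast_img_le; lia.
Qed.

End TC.

Section TC2.
Variable V : Type.
Implicit Types A B : V -> Prop.

Lemma atleast_add A B a b : (forall z, A z -> B z -> False) ->
  atleast a A -> atleast b B -> atleast (a + b) (fun z => A z \/ B z).
Proof.
move=> dis [ea [ia Aa]] [eb [ib Bb]].
exists (fun i : 'I_(a+b) => match split i with inl x => ea x | inr y => eb y end); split.
- move=> i j /=; case: (splitP i) => x hx; case: (splitP j) => y hy E.
  + apply: val_inj; by rewrite /= hx hy (ia _ _ E).
  + exfalso; apply: (dis (ea x)); [exact: Aa | rewrite E; exact: Bb].
  + exfalso; apply: (dis (eb x)); [rewrite E; exact: Aa | exact: Bb].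
  + apply: val_inj; by rewrite /= hx hy (ib _ _ E).
- move=> i; case: (splitP i) => x _; [left|right]; auto.
Qed.

Lemma atleast_split A B n : atleast n (fun z => A z \/ B z) ->
  exists n1 n2, n = n1 + n2 /\ atleast n1 A /\ atleast n2 B.
Proof.
move=> [e [ie hAB]].
pose J := [pred i | pb (A (e i))].
exists #|J|, #|[predC J]|; split; first by rewrite cardC card_ord.
split.
- have := atleast_img J ie; apply: atleast_ext => z [i Ji <-]; by move: Ji => /= /pbP.
- have := atleast_img [predC J] ie; apply: atleast_ext => z [i Ji <-].
  case: (hAB i) => // hA; exfalso; move: Ji => /= /negP; apply; exact/pbP.
Qed.

Lemma tc_union k A B : (forall z, A z -> B z -> False) ->
  tc k (fun z => A z \/ B z) = minn k (tc k A + tc k B).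
Proof.
move=> dis; apply: tc_eq; first exact: geq_minl.
- apply: atleast_le (atleast_add dis (tc_atleast k A) (tc_atleast k B)); exact: geq_minr.
- move=> lt /atleast_split [n1 [n2 [e [h1 h2]]]].
  have lA : tc k A < k by lia.
  have lB : tc k B < k by lia.
  have := tc_small lA h1; have := tc_small lB h2; lia.
Qed.

Lemma tc_empty k A : (forall z, ~ A z) -> tc k A = 0.
Proof.
move=> h; apply: tc_eq => //; first exact: atleast0.
move=> _ [e [_ Ae]]; exact: (h _ (Ae ord0)).
Qed.

Lemma tc_bigU (I : eqType) k (S : I -> V -> Prop) (l : seq I) : uniq l ->
  (forall i j z, S i z -> S j z -> i = j) ->
  tc k (fun z => exists2 i, i \in l & S i z) = minn k (\sum_(i <- l) tc k (S i)).
Proof.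
move=> ul dis; elim: l ul => [|i l IH] /=.
  move=> _; rewrite big_nil minn0; apply: tc_empty => z [i]; by rewrite in_nil.
move=> /andP [il ul].
rewrite (@tc_ext _ k _ (fun z => S i z \/ exists2 j, j \in l & S j z)); last first.
  move=> z; split.
  - move=> [j]; rewrite in_cons => /orP [/eqP -> | jl] hj; [by left | right; by exists j].
  - case=> [h|[j jl hj]]; [exists i => //; exact: mem_head | exists j => //; by rewrite in_cons jl orbT].
rewrite tc_union; last first.
  move=> z hi [j jl hj]; have ij := dis _ _ _ hi hj; subst j; by rewrite jl in il.
rewrite IH // big_cons; lia.
Qed.

Lemma tc_pos_ex k A : 0 < tc k A -> exists a, A a.
Proof. move=> h; have [e [_ Ae]] := atleast_le h (tc_atleast k A).
exists (e ord0); exact: Ae. Qed.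

Lemma atleast_ex A n : 0 < n -> atleast n A -> exists a, A a.
Proof. move=> h [e [_ Ae]]; exists (e (Ordinal h)); exact: Ae. Qed.

Lemma tc_exact k A n (e : 'I_n -> V) : tc k A = n -> n < k -> injective e ->
  (forall i, A (e i)) -> forall a, A a -> exists i, e i = a.
Proof.
move=> tcn nk ie Ae a Aa; apply: NNPP => hn.
have h1 : atleast 1 (fun z => z = a).
  exists (fun _ => a); split => // i j _; by rewrite (ord1 i) (ord1 j).
have h3 : atleast n (fun z => exists2 i, predT i & e i = z).
  have := atleast_img predT ie. by rewrite card_ord.
have dis : forall z, (exists2 i, predT i & e i = z) -> z = a -> False.
  move=> z [i _ <-] ez; apply: hn; by exists i.
have h4 := atleast_add dis h3 h1.
have h5 : atleast (n+1) A by move: h4; apply: atleast_ext => z [[i _ <-] | ->].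
have := tc_small (A := A) (k := k) (n := n + 1); rewrite tcn; move=> /(_ nk h5); lia.
Qed.

End TC2.

Lemma card_nth' (T : eqType) (x0 : T) (s : seq T) n (P : pred T) : size s = n ->
  #|[pred i : 'I_n | P (nth x0 s i)]| = count P s.
Proof.
move=> <-.
rewrite -[in RHS](mkseq_nth x0 s) /mkseq count_map -val_enum_ord count_map.
rewrite cardE /enum_mem size_filter count_filter; apply: eq_count => i; by rewrite /= inE andbT.
Qed.

Lemma sum_le_const (I : eqType) (l : seq I) (F : I -> nat) b :
  (forall x, x \in l -> F x <= b) -> \sum_(x <- l) F x <= size l * b.
Proof.
elim: l => [|x l IH] h; first by rewrite big_nil.
rewrite big_cons /= mulSn leq_add //; first by apply: h; rewrite mem_head.
apply: IH => y yl; apply: h; by rewrite in_cons yl orbT.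
Qed.

Lemma count_sq (S : eqType) (c : S -> nat) (l : seq S) s : uniq l ->
  count (pred1 s) (flatten [seq nseq (c x) x | x <- l]) = if s \in l then c s else 0.
Proof.
elim: l => [|x l IH] //= /andP [xl ul].
rewrite count_cat count_nseq IH // in_cons /=.
case: (eqVneq s x) => [->|ne] /=; first by rewrite (negbTE xl) mul1n addn0.
by rewrite mul0n.
Qed.

Lemma size_sq (S : Type) (c : S -> nat) (l : seq S) :
  size (flatten [seq nseq (c x) x | x <- l]) = \sum_(x <- l) c x.
Proof. elim: l => [|x l IH] /=; first by rewrite big_nil. by rewrite size_cat size_nseq IH big_cons. Qed.

Lemma phi_exists (S : finType) (s0 : S) (l : seq S) (c : S -> nat) T :
  uniq l -> s0 \notin l -> \sum_(x <- l) c x <= T ->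
  exists phi : 'I_T -> S, (forall s, s \in l -> #|[pred i | phi i == s]| = c s) /\
    (forall i, phi i \in s0 :: l) /\
    T - \sum_(x <- l) c x <= #|[pred i | phi i == s0]|.
Proof.
move=> ul s0l hT.
pose sq := flatten [seq nseq (c x) x | x <- l].
pose sq' := sq ++ nseq (T - size sq) s0.
have hs : size sq' = T by rewrite size_cat size_nseq size_sq; lia.
exists (fun i => nth s0 sq' i); split; [|split].
- move=> s sl; rewrite (card_nth' s0 (fun x => x == s) hs).
  rewrite count_cat (count_sq c s ul) sl count_nseq.
  have -> : (s0 == s) = false by apply/eqP => e; subst s; by rewrite sl in s0l.
  by rewrite mul0n addn0.
- move=> i; case: (ltnP i (size sq)) => hi.
  + rewrite nth_cat hi; have : nth s0 sq i \in sq by apply: mem_nth.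
    move=> /flattenP [x /mapP [y yl ->]] /nseqP [-> _]. by rewrite in_cons yl orbT.
  + rewrite nth_cat ltnNge hi /= nth_nseq; case: ifP => _; by rewrite mem_head.
- rewrite (card_nth' s0 (fun x => x == s0) hs) count_cat count_nseq eqxx mul1n size_sq.
  exact: leq_addl.
Qed.

Definition inv_opt (I V : Type) (e : I -> V) (b : V) : option I :=
  match excluded_middle_informative (exists i, e i = b) with
  | left h => Some (proj1_sig (constructive_indefinite_description _ h))
  | right _ => None end.

Lemma inv_optK (I V : Type) (e : I -> V) i : injective e -> inv_opt e (e i) = Some i.
Proof.
move=> ie; rewrite /inv_opt; case: excluded_middle_informative => [h|h]; last by case: h; exists i.
case: constructive_indefinite_description => x /= hx; by rewrite (ie _ _ hx).
Qed.

Lemma inv_optN (I V : Type) (e : I -> V) b : (forall i, e i <> b) -> inv_opt e b = None.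
Proof. move=> h; rewrite /inv_opt; case: excluded_middle_informative => // [[i hi]]; by case: (h i). Qed.

Lemma tc_lower (V : Type) (A : V -> Prop) T T' : tc T' A < T' -> T' <= T -> tc T A = tc T' A.
Proof.
move=> lt le; apply: tc_eq; [lia | exact: tc_atleast |].
move=> _ h; have := tc_small lt h; lia.
Qed.

Lemma distr (V1 V2 : Type) (S : finType) (s0 : S) (A : V1 -> Prop) (B : V2 -> Prop)
  (g : V1 -> S) T T' :
  0 < T' -> #|S| * T' <= T -> tc T A = tc T B ->
  exists f : V2 -> S, (forall b, B b -> exists a, A a /\ g a = f b) /\
    forall s, tc T' (fun b => B b /\ f b = s) = tc T' (fun a => A a /\ g a = s).
Proof.
move=> T'pos hT hAB.
have S0 : 0 < #|S| by apply/card_gt0P; exists s0.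
have T'T : T' <= T by apply: leq_trans hT; rewrite leq_pmull.
case: (ltnP (tc T A) T) => [ltA | geA].
- have ltB : tc T B < T by rewrite -hAB.
  have [eb [ib Bb]] := tc_atleast T B.
  have := tc_atleast T A; rewrite hAB => -[ea [ia Aa]].
  have exA := tc_exact hAB ltB ia Aa.
  have exB := tc_exact (erefl _) ltB ib Bb.
  exists (fun b => if inv_opt eb b is Some i then g (ea i) else s0); split.
  + move=> b /exB [i <-]; rewrite inv_optK //; exists (ea i); split => //.
  + move=> s; pose J := [pred i | g (ea i) == s].
    rewrite (tc_img (J := J) T' ib); last first.
      move=> b; split.
      * move=> [/exB [i <-]]; rewrite inv_optK // => e; exists i => //; by rewrite /J /= e.
      * move=> [i /eqP Ji <-]; rewrite inv_optK //; split => //.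
    rewrite (tc_img (J := J) T' ia) //.
    move=> a; split.
    * move=> [/exA [i <-]] e; exists i => //; by rewrite /J /= e.
    * move=> [i /eqP Ji <-]; split => //.
- have eA : tc T A = T by apply/eqP; rewrite eqn_leq tc_le geA.
  pose c s := tc T' (fun a => A a /\ g a = s).
  have [s1 hs1] : exists s1, c s1 = T'.
    apply: NNPP => hn.
    have small : forall s, c s < T'.
      move=> s; have := tc_le T' (fun a => A a /\ g a = s); rewrite -/(c s) leq_eqVlt.
      case/orP => // /eqP e; case: hn; by exists s.
    have := @tc_bigU _ _ T (fun s a => A a /\ g a = s) (enum S) (enum_uniq _).
    move=> /(_ (fun i j z h1 h2 => etrans (esym (proj2 h1)) (proj2 h2))).
    rewrite (@tc_ext _ T _ A); last first.
      move=> a; split; [by case=> s _ [] | move=> Aa; exists (g a); [by rewrite mem_enum| by []]].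
    rewrite eA => h.
    have : \sum_(s <- enum S) tc T (fun a => A a /\ g a = s) <= size (enum S) * T'.-1.
      apply: sum_le_const => s _; rewrite (tc_lower (small s)) //.
      have := small s; rewrite /c; lia.
    have h2 : #|S| * T'.-1 < #|S| * T' by rewrite ltn_pmul2l //; lia.
    rewrite -cardE; move: h h2 hT; set X := (\sum_(i <- enum S) _); set Y := #|S| * T'.-1; set Z := #|S| * T'; lia.
  have [eb [ib Bb]] := tc_atleast T B; move: eb ib Bb; rewrite -hAB eA => eb ib Bb.
  pose l := [seq s <- enum S | s != s1].
  have ul : uniq l by rewrite filter_uniq // enum_uniq.
  have s1l : s1 \notin l by rewrite mem_filter eqxx.
  have szl : (size l).+1 <= #|S|.
    rewrite cardE; have : uniq (s1 :: l) by rewrite /= s1l ul.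
    move=> /uniq_leq_size; apply => x; rewrite in_cons mem_filter mem_enum andbT; by case: eqP.
  have cle : forall s, c s <= T' by move=> s; exact: tc_le.
  have hsum : \sum_(x <- l) c x <= size l * T' by apply: sum_le_const.
  have hlT : size l * T' <= T - T'.
    have : (size l).+1 * T' <= #|S| * T' by rewrite leq_mul2r szl orbT.
    rewrite mulSn; move: hT; set Y := size l * T'; set Z := #|S| * T'; lia.
  have [phi [hphi1 [hphi2 hphi3]]] := phi_exists (c := c) ul s1l (leq_trans hsum (leq_trans hlT (leq_subr _ _))).
  exists (fun b => if inv_opt eb b is Some i then phi i else s1); split.
  + move=> b Bb'; case: (pbP (exists i, eb i = b)) => [[i <-]|hn]; last first.
      rewrite inv_optN; last by move=> i e; apply: hn; exists i.
      apply: (tc_pos_ex (k := T')); by rewrite -/(c s1) hs1.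
    rewrite inv_optK //; have := hphi2 i; rewrite in_cons => /orP [/eqP ->|il].
      apply: (tc_pos_ex (k := T')); by rewrite -/(c s1) hs1.
    apply: (tc_pos_ex (k := T')); rewrite -/(c (phi i)) -(hphi1 _ il).
    apply/card_gt0P; exists i; by rewrite inE /=.
  + move=> s; rewrite -/(c s); case: (eqVneq s s1) => [->|ne].
    * rewrite hs1; apply/eqP; rewrite eqn_leq tc_le /=.
      have := @tc_min _ T' (fun b => B b /\ (if inv_opt eb b is Some i then phi i else s1) = s1) #|[pred i | phi i == s1]|.
      move=> h; apply: leq_trans (h _) => //; last first.
        move: (atleast_img [pred i | phi i == s1] ib); apply: atleast_ext => b [i /eqP hi <-].
        by rewrite inv_optK.
      move: hphi3 hsum hlT; set Y := size l * T'; set X := \sum_(x <- l) c x; lia.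
    * have sl : s \in l by rewrite mem_filter ne mem_enum.
      rewrite (tc_img (J := [pred i | phi i == s]) T' ib); last first.
        move=> b; split.
        -- move=> [Bb' hb]; case: (pbP (exists i, eb i = b)) => [[i ei]|hn].
             subst b; move: hb; rewrite inv_optK // => hb; exists i => //; by rewrite /= hb eqxx.
           move: hb; rewrite inv_optN; last by move=> i e; apply: hn; exists i.
           move=> e; by rewrite e eqxx in ne.
        -- move=> [i /eqP hi <-]; rewrite inv_optK //.
      rewrite hphi1 //; apply/minn_idPr; exact: cle.
Qed.

Section Reach.
Variable p : nat.
Variable t : lstruct p.

Lemma reach_trans k j u y z : reach t k u y -> reach t j y z -> reach t (k + j) u z.
Proof.
elim=> [w|k' a b c Eab _ IH] h //=.
rewrite addSn; apply: reachS Eab _; exact: IH.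
Qed.

Lemma reach1 u z : E t u z -> reach t 1 u z.
Proof. move=> h; apply: reachS h _; exact: reach0. Qed.

Lemma reach_invS k u z : reach t k.+1 u z -> exists w, E t u w /\ reach t k w z.
Proof.
move=> h; inversion h as [|k' a w b e r]; subst; by exists w.
Qed.

Lemma reach0_eq u z : reach t 0 u z -> u = z.
Proof.
move=> h; by inversion h.
Qed.

Lemma reach_last k u z : reach t k.+1 u z -> exists y, reach t k u y /\ E t y z.
Proof.
move: u z; elim: k => [|k IH] u z h.
- have [w [e r]] := reach_invS h; rewrite -(reach0_eq r). exists u; split => //; exact: reach0.
- have [w [e r]] := reach_invS h. have [y [h1 h2]] := IH _ _ r. exists y; split => //. exact: reachS e h1.
Qed.

Lemma reach_split k j u z : reach t (k + j) u z -> exists y, reach t k u y /\ reach t j y z.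
Proof.
move: u; elim: k => [|k IH] u h /=.
- exists u; split => //; exact: reach0.
- rewrite addSn in h; have [w [e r]] := reach_invS h. have [y [h1 h2]] := IH _ r.
  exists y; split => //; exact: reachS e h1.
Qed.

Definition D h (w z : V t) := exists2 k, k <= h & reach t k w z.

Lemma D_refl h w : D h w w.
Proof. exists 0 => //; exact: reach0. Qed.

Lemma D_child h w w' z : E t w w' -> D h w' z -> D h.+1 w z.
Proof. move=> e [k kh r]; exists k.+1 => //; exact: reachS e r. Qed.

Lemma D_step h w z : D h.+1 w z -> z = w \/ exists2 w', E t w w' & D h w' z.
Proof.
move=> [[|k] kh r]; first by left; exact/esym/reach0_eq.
have [w' [e r']] := reach_invS r; right; exists w' => //; by exists k.
Qed.

Variable d : nat.
Hypothesis Ht : in_T d t.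

Lemma parent_uniq a b z : E t a z -> E t b z -> a = b.
Proof.
move: Ht => [nr [pu _]] ea eb.
have zr : z <> root t by move=> e; subst z; exact: (nr _ ea).
have [u [_ hu]] := pu _ zr. by rewrite (hu _ ea) (hu _ eb).
Qed.

Lemma anc_uniq k x y z : reach t k x z -> reach t k y z -> x = y.
Proof.
move: z; elim: k => [|k IH] z h1 h2.
- by rewrite (reach0_eq h1) (reach0_eq h2).
- have [a [ra ea]] := reach_last h1; have [b [rb eb]] := reach_last h2.
  have ab := parent_uniq ea eb; subst b; exact: IH ra rb.
Qed.

Lemma root_reach_self k : reach t k (root t) (root t) -> k = 0.
Proof.
case: k => // k h; have [y [_ e]] := reach_last h. by case: Ht => [nr _]; case: (nr _ e).
Qed.

Lemma depth_uniq a b z : reach t a (root t) z -> reach t b (root t) z -> a = b.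
Proof.
wlog ab : a b / a <= b.
  move=> H h1 h2; case: (leqP a b) => hab; first exact: H.
  symmetry; apply: H => //; exact: ltnW.
move=> h1 h2; have e : b = (b - a) + a by lia.
rewrite e in h2; have [y [r1 r2]] := reach_split h2.
have ey := anc_uniq r2 h1; subst y.
have := root_reach_self r1; lia.
Qed.

Lemma depth_ex z : exists2 k, k <= d & reach t k (root t) z.
Proof. case: Ht => [_ [_ h]]; have [k [kd r]] := h z; by exists k. Qed.

Lemma D_root z : D d (root t) z.
Proof. have [k kd r] := depth_ex z; by exists k. Qed.

Lemma child_notin h v v' : E t v v' -> D h v' v -> False.
Proof.
move=> e [k _ r]; have [a _ ra] := depth_ex v.
have r2 := reach_trans ra (reachS e r).
have := depth_uniq ra r2; lia.
Qed.

Lemma child_disj h v v1 v2 z : E t v v1 -> E t v v2 -> D h v1 z -> D h v2 z -> v1 = v2.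
Proof.
move=> e1 e2 [k1 _ r1] [k2 _ r2]; have [a _ ra] := depth_ex v.
have q1 := reach_trans ra (reachS e1 r1); have q2 := reach_trans ra (reachS e2 r2).
have ek := depth_uniq q1 q2; have ek' : k1 = k2 by lia. subst k2.
exact: anc_uniq r1 r2.
Qed.
End Reach.

Section Sig.
Variable K : finType.

Fixpoint SigT (th : nat -> nat) (h : nat) : finType :=
  if h is h'.+1 then (K * {ffun SigT th h' -> 'I_(th h').+1})%type else K.

Definition sigc th h : SigT th h -> K :=
  match h with 0 => fun s => s | h'.+1 => fun s => s.1 end.

Variable p : nat.

Fixpoint sigf (t : lstruct p) (c : V t -> K) th h {struct h} : V t -> SigT th h :=
  match h return V t -> SigT th h with
  | 0 => c
  | h'.+1 => fun w => (c w, [ffun s => inord (tc (th h') (fun z => E t w z /\ sigf c th h' z = s))])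
  end.

Lemma sigcE t c th h w : sigc (@sigf t c th h w) = c w.
Proof. by case: h. Qed.

Definition cnt th h (s : SigT th h.+1) (x : SigT th h) : nat := s.2 x.

Lemma cntE t c th h w x :
  cnt (@sigf t c th h.+1 w) x = tc (th h) (fun z => E t w z /\ sigf c th h z = x).
Proof. by rewrite /cnt /= ffunE inordK // ltnS tc_le. Qed.

Lemma sigf_eqS t1 t2 c1 c2 th h w1 w2 :
  c1 w1 = c2 w2 ->
  (forall x, tc (th h) (fun z => E t1 w1 z /\ sigf c1 th h z = x) =
             tc (th h) (fun z => E t2 w2 z /\ sigf c2 th h z = x)) ->
  @sigf t1 c1 th h.+1 w1 = @sigf t2 c2 th h.+1 w2.
Proof.
move=> ec ex /=; rewrite ec; congr pair; apply/ffunP => x; rewrite !ffunE; by rewrite ex.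
Qed.

Lemma sigf_eqS_inv t1 t2 c1 c2 th h w1 w2 :
  @sigf t1 c1 th h.+1 w1 = @sigf t2 c2 th h.+1 w2 ->
  c1 w1 = c2 w2 /\
  (forall x, tc (th h) (fun z => E t1 w1 z /\ sigf c1 th h z = x) =
             tc (th h) (fun z => E t2 w2 z /\ sigf c2 th h z = x)).
Proof.
move=> e; split; first by have := congr1 (@sigc th h.+1) e; rewrite !sigcE.
move=> x; by rewrite -!cntE e.
Qed.

Lemma sigf_local t c c' th h w :
  (forall z, D h w z -> c z = c' z) -> @sigf t c th h w = @sigf t c' th h w.
Proof.
elim: h w => [|h IH] w hc /=; first by apply: hc; exact: D_refl.
rewrite (hc w (D_refl _ _)); congr pair; apply/ffunP => x; rewrite !ffunE; congr inord.
apply: tc_ext => z; split => -[e hz]; split => //.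
- rewrite -hz; symmetry; apply: IH => y hy; apply: hc; exact: D_child e hy.
- rewrite -hz; apply: IH => y hy; apply: hc; exact: D_child e hy.
Qed.

Lemma sigf_child t1 t2 c1 c2 th h w1 w2 z1 :
  0 < th h -> @sigf t1 c1 th h.+1 w1 = @sigf t2 c2 th h.+1 w2 -> E t1 w1 z1 ->
  exists z2, E t2 w2 z2 /\ sigf c2 th h z2 = sigf c1 th h z1.
Proof.
move=> th0 /sigf_eqS_inv [_ hx] e.
have : 0 < tc (th h) (fun z => E t1 w1 z /\ sigf c1 th h z = sigf c1 th h z1).
  apply: tc_ge => //; exists (fun _ => z1); split => // i j _; by rewrite (ord1 i) (ord1 j).
rewrite hx => /tc_pos_ex [z2 [e2 h2]]; by exists z2.
Qed.

End Sig.

Section SM.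
Variables (K : finType) (p d : nat) (t1 t2 : lstruct p).
Hypothesis H2 : in_T d t2.
Variable U : K -> bool -> K.
Variables th th' : nat -> nat.
Hypothesis hth : forall h, #|SigT K th' h| * th' h <= th h.
Hypothesis hth' : forall h, 0 < th' h.

Lemma set_move h : forall (c1 : V t1 -> K) (c2 : V t2 -> K) u v,
  sigf c1 th h u = sigf c2 th h v ->
  forall X : V t1 -> Prop, exists X' : V t2 -> Prop,
   sigf (fun z => U (c1 z) (pb (X z))) th' h u = sigf (fun z => U (c2 z) (pb (X' z))) th' h v.
Proof.
elim: h => [|h IH] c1 c2 u v e X.
  exists (fun _ => X u); move: e => /= ->; done.
have [ec ecnt] := sigf_eqS_inv e.
pose c1' := fun z => U (c1 z) (pb (X z)).
pose g := fun z => sigf c1' th' h z.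
pose A (τ : SigT K th h) := fun z => E t1 u z /\ sigf c1 th h z = τ.
pose B (τ : SigT K th h) := fun z => E t2 v z /\ sigf c2 th h z = τ.
have hF : forall τ, exists f : V t2 -> SigT K th' h,
    (forall b, B τ b -> exists a, A τ a /\ g a = f b) /\
    forall σ, tc (th' h) (fun b => B τ b /\ f b = σ) = tc (th' h) (fun a => A τ a /\ g a = σ).
  move=> τ; apply: (distr (g u)) => //; exact: ecnt.
have [F hFp] : exists F : SigT K th h -> V t2 -> SigT K th' h, forall τ,
    (forall b, B τ b -> exists a, A τ a /\ g a = F τ b) /\
    forall σ, tc (th' h) (fun b => B τ b /\ F τ b = σ) = tc (th' h) (fun a => A τ a /\ g a = σ).
  exists (fun τ => proj1_sig (constructive_indefinite_description _ (hF τ))).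
  move=> τ; exact: (proj2_sig (constructive_indefinite_description _ (hF τ))).
pose f z := F (sigf c2 th h z) z.
have hY : forall v', exists Y : V t2 -> Prop, E t2 v v' ->
    f v' = sigf (fun z => U (c2 z) (pb (Y z))) th' h v'.
  move=> v'; case: (pbP (E t2 v v')) => ev; last by exists (fun _ => False).
  have [a [[ea sa] ga]] := (hFp (sigf c2 th h v')).1 v' (conj ev erefl).
  have [Y hY] := IH c1 c2 a v' sa X.
  exists Y => _; rewrite /f -ga; exact: hY.
have [Yf hYf] : exists Yf : V t2 -> V t2 -> Prop, forall v', E t2 v v' ->
    f v' = sigf (fun z => U (c2 z) (pb (Yf v' z))) th' h v'.
  exists (fun v' => proj1_sig (constructive_indefinite_description _ (hY v'))).
  move=> v'; exact: (proj2_sig (constructive_indefinite_description _ (hY v'))).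
pose X' := fun z => (z = v /\ X u) \/ (exists v', E t2 v v' /\ D h v' z /\ Yf v' z).
exists X'.
have loc : forall v', E t2 v v' -> sigf (fun z => U (c2 z) (pb (X' z))) th' h v' = f v'.
  move=> v' ev; rewrite (hYf _ ev); apply: sigf_local => z hz; congr U; apply: pb_iff; split.
  - case=> [[ez _]| [v'' [ev'' [hz'' hy]]]]; first by subst z; case: (child_notin H2 ev hz).
    by rewrite (child_disj H2 ev ev'' hz hz'').
  - move=> hy; right; exists v'; auto.
apply: sigf_eqS.
  rewrite ec; congr U; apply: pb_iff; split; first by move=> hx; left.
  case=> [[_ //]| [v' [ev [hv _]]]]; case: (child_notin H2 ev hv).
move=> σ.
have uS := enum_uniq (SigT K th h).
transitivity (tc (th' h) (fun z => exists2 τ, τ \in enum (SigT K th h) & (A τ z /\ g z = σ))).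
  apply: tc_ext => z; split.
  - move=> [ez hz]; exists (sigf c1 th h z); [by rewrite mem_enum | by []].
  - by move=> [τ _ [[ez _] hz]].
transitivity (tc (th' h) (fun z => exists2 τ, τ \in enum (SigT K th h) & (B τ z /\ F τ z = σ))); last first.
  apply: tc_ext => z; split.
  - move=> [τ _ [[ev hτ] hF']]; split => //; rewrite loc // /f hτ //.
  - move=> [ev hz]; exists (sigf c2 th h z); first by rewrite mem_enum.
    split; first by []. by rewrite -hz loc.
rewrite !tc_bigU //.
- congr minn; apply: eq_bigr => τ _; symmetry; exact: (hFp τ).2 σ.
- by move=> i j z [[_ h1] _] [[_ h2] _]; rewrite -h1 -h2.
- by move=> i j z [[_ h1] _] [[_ h2] _]; rewrite -h1 -h2.
Qed.
End SM.

Section One.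
Variables (K : finType) (B : K -> bool) (th : nat -> nat).

Fixpoint zero h : SigT K th h -> Prop :=
  match h return SigT K th h -> Prop with
  | 0 => fun s => ~~ B s
  | h'.+1 => fun s => ~~ B s.1 /\ forall x, 0 < cnt s x -> zero x
  end.

Fixpoint one h : SigT K th h -> Prop :=
  match h return SigT K th h -> Prop with
  | 0 => fun s => B s
  | h'.+1 => fun s => if B s.1 then (forall x, 0 < cnt s x -> zero x)
       else exists x0, cnt s x0 = 1 /\ one x0 /\ forall x, 0 < cnt s x -> x <> x0 -> zero x
  end.

Variables (p d : nat) (t : lstruct p).
Hypothesis Ht : in_T d t.
Hypothesis hth : forall h, 1 < th h.
Variable c : V t -> K.

Lemma cnt_pos h w x : 0 < cnt (sigf c th h.+1 w) x <-> exists w', E t w w' /\ sigf c th h w' = x.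
Proof.
rewrite cntE; split; first by move=> /tc_pos_ex.
move=> [w' [e hx]]; apply: tc_ge; first by have := hth h; lia.
exists (fun _ => w'); split => // i j _; by rewrite (ord1 i) (ord1 j).
Qed.

Lemma cnt_one h w x : cnt (sigf c th h.+1 w) x = 1 <->
  (exists w', E t w w' /\ sigf c th h w' = x) /\
  (forall w1 w2, E t w w1 -> sigf c th h w1 = x -> E t w w2 -> sigf c th h w2 = x -> w1 = w2).
Proof.
rewrite cntE; split.
- move=> h1; split; first by apply: (tc_pos_ex (k := th h)); rewrite h1.
  move=> w1 w2 e1 s1 e2 s2; apply: NNPP => ne.
  have : atleast 2 (fun z => E t w z /\ sigf c th h z = x).
    exists (fun i : 'I_2 => if val i == 0 then w1 else w2); split.
    + move=> i j; case: i => [[|[|i]] hi] //; case: j => [[|[|j]] hj] //= e;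
        try (by apply: val_inj); by case: ne.
    + move=> i; case: (val i == 0); by split.
  have lt : tc (th h) (fun z => E t w z /\ sigf c th h z = x) < th h by rewrite h1 hth.
  move=> /(tc_small lt); lia.
- move=> [[w' [e s]] uq]; apply: tc_eq; [by have := hth h; lia| |].
  + exists (fun _ => w'); split => // i j _; by rewrite (ord1 i) (ord1 j).
  + move=> _ [f [fi fA]].
    have [e1 s1] := fA ord0; have [e2 s2] := fA (Ordinal (isT : 1 < 2)).
    by have := fi _ _ (uq _ _ e1 s1 e2 s2).
Qed.

Lemma zero_iff h w : zero (sigf c th h w) <-> forall z, D h w z -> ~~ B (c z).
Proof.
elim: h w => [|h IH] w /=.
  split; [move=> hb z [k kh r]; move: kh; rewrite leqn0 => /eqP k0; subst k; by rewrite -(reach0_eq r) | move=> h; apply: h; exact: D_refl].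
split.
- move=> [bw hx] z /D_step [->|[w' e hz]] //.
  have : 0 < cnt (sigf c th h.+1 w) (sigf c th h w') by apply/cnt_pos; exists w'.
  move=> /hx /IH; apply; exact: hz.
- move=> hz; split; first by apply: hz; exact: D_refl.
  move=> x /cnt_pos [w' [e <-]]; apply/IH => z hz'; apply: hz; exact: D_child e hz'.
Qed.

Lemma one_iff h w : one (sigf c th h w) <->
  exists z, D h w z /\ B (c z) /\ forall z', D h w z' -> B (c z') -> z' = z.
Proof.
elim: h w => [|h IH] w /=.
  have d0 : forall z, D 0 w z -> z = w.
    move=> z [k kh r]; move: kh; rewrite leqn0 => /eqP k0; subst k; by rewrite -(reach0_eq r).
  split; [move=> hb; exists w; split; [exact: D_refl | split => // z' /d0 //] |].
  by move=> [z [/d0 -> [hb _]]].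
case: ifP => bw; split.
- move=> hx; exists w; split; [exact: D_refl| split => //].
  move=> z' /D_step [//|[w' e hz]] bz.
  have : 0 < cnt (sigf c th h.+1 w) (sigf c th h w') by apply/cnt_pos; exists w'.
  move=> /hx /zero_iff /(_ _ hz); by rewrite bz.
- move=> [z [hz [bz uz]]] x /cnt_pos [w' [e <-]]; apply/zero_iff => z' hz'.
  apply/negP => bz'; have ez := uz _ (D_child e hz') bz'; subst z'.
  have ezw := uz _ (D_refl _ _) bw; subst z; exact: (child_notin Ht e hz').
- move=> [x0 [/cnt_one [[w0 [e0 s0]] u0] [o0 hx]]].
  rewrite -s0 in o0; have [z [hz [bz uz]]] := proj1 (IH w0) o0.
  exists z; split; [exact: D_child e0 hz | split => //].
  move=> z' /D_step [-> | [w' e hz']] bz'; first by rewrite bz' in bw.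
  case: (eqVneq (sigf c th h w') x0) => [ex|nx].
  + have ew := u0 _ _ e ex e0 s0; subst w'; exact: uz.
  + have : 0 < cnt (sigf c th h.+1 w) (sigf c th h w') by apply/cnt_pos; exists w'.
    move=> /hx /(_ (elimN eqP nx)) /zero_iff /(_ _ hz'); by rewrite bz'.
- move=> [z [hz [bz uz]]].
  have [ezw|[w0 e0 hz0]] := D_step hz; first by subst z; rewrite bz in bw.
  have o0 : one (sigf c th h w0).
    apply/IH; exists z; split; [by []| split => //].
    move=> z' hz' bz'; apply: uz => //; exact: D_child e0 hz'.
  exists (sigf c th h w0); split; [|split => //].
  + apply/cnt_one; split; first by exists w0.
    have key : forall w1, E t w w1 -> sigf c th h w1 = sigf c th h w0 -> w1 = w0.
      move=> w1 e1 s1; rewrite -s1 in o0; have := o0.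
      move=> /IH [z1 [hz1 [bz1 _]]]; have ez := uz _ (D_child e1 hz1) bz1; subst z1.
      exact: (child_disj Ht e1 e0 hz1 hz0).
    move=> w1 w2 e1 s1 e2 s2; by rewrite (key _ e1 s1) (key _ e2 s2).
  + move=> x /cnt_pos [w' [e <-]] nx; apply/zero_iff => z' hz'; apply/negP => bz'.
    have ez := uz _ (D_child e hz') bz'; subst z'.
    have := child_disj Ht e e0 hz' hz0; move=> ew; subst w'; by case: nx.
Qed.
End One.

Lemma card_SigT (K : finType) th h : #|SigT K th h.+1| = #|K| * (th h).+1 ^ #|SigT K th h|.
Proof. by rewrite /= card_prod card_ffun card_ord. Qed.

Lemma card_SigT_pos (K : finType) th h : 0 < #|K| -> 0 < #|SigT K th h|.
Proof. move=> k0; case: h => [|h] //; rewrite card_SigT muln_gt0 k0 expn_gt0 //. Qed.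

Section MSO.
Variables (p m d : nat).
Definition Kc : finType := ('I_p * {ffun 'I_m -> bool})%type.
Definition col (t : lstruct p) (regs : nat -> V t -> Prop) : V t -> Kc :=
  fun w => (lab t w, [ffun i : 'I_m => pb (regs (val i) w)]).
Fixpoint th (r : nat) (h : nat) : nat :=
  if r is r'.+1 then #|SigT Kc (th r') h| * th r' h else 2.
Definition G r (t1 t2 : lstruct p) regs1 regs2 :=
  sigf (@col t1 regs1) (th r) d (root t1) = sigf (@col t2 regs2) (th r) d (root t2).
Definition upd (T : Type) (regs : nat -> T -> Prop) j X := fun i => if i == j then X else regs i.
Definition Uj j (c : Kc) b : Kc := (c.1, [ffun i : 'I_m => if val i == j then b else c.2 i]).

Lemma col_upd t regs j X w : @col t (upd regs j X) w = Uj j (col regs w) (pb (X w)).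
Proof. rewrite /col /Uj /=; congr pair; apply/ffunP => i; rewrite !ffunE /upd; by case: eqP. Qed.

Lemma col_bit t regs j (jm : j < m) w : (@col t regs w).2 (Ordinal jm) = pb (regs j w).
Proof. by rewrite /col ffunE. Qed.

Hypothesis p0 : 0 < p.

Lemma cardK : 0 < #|Kc|.
Proof. by rewrite /Kc card_prod card_ffun !card_ord card_bool muln_gt0 p0 expn_gt0. Qed.

Lemma th_ge2 r h : 1 < th r h.
Proof.
elim: r => [|r IH]; first by []. rewrite /=. have := card_SigT_pos (th r) h cardK.
move: IH; set a := th r h; set b := #|_|; nia.
Qed.

Lemma th_pos r h : 0 < th r h.
Proof. have := th_ge2 r h; lia. Qed.

Section Moves.
Variables (t1 t2 : lstruct p).
Hypotheses (H1 : in_T d t1) (H2 : in_T d t2).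

Lemma SM_top r (regs1 : nat -> V t1 -> Prop) (regs2 : nat -> V t2 -> Prop) j : G r.+1 regs1 regs2 ->
  forall X, exists X', G r (upd regs1 j X) (upd regs2 j X').
Proof.
move=> hG X.
have [X' e] := set_move H2 (Uj j) (fun h => leqnn _) (th_pos r) hG X.
exists X'; rewrite /G.
rewrite (@sigf_local _ _ _ _ (fun z => Uj j (col regs1 z) (pb (X z)))); last by move=> z _; exact: col_upd.
rewrite e; apply: sigf_local => z _; by rewrite col_upd.
Qed.

Lemma PM_top r (regs1 : nat -> V t1 -> Prop) (regs2 : nat -> V t2 -> Prop) j : j < m -> G r.+1 regs1 regs2 ->
  forall v, exists v', G r (upd regs1 j (fun z => z = v)) (upd regs2 j (fun z => z = v')).
Proof.
move=> jm hG v; have [X' hG'] := SM_top j hG (fun z => z = v).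
pose B := fun c : Kc => c.2 (Ordinal jm).
have Bc : forall t regs X z, B (@col t (upd regs j X) z) = pb (X z).
  move=> t regs X z; by rewrite /B col_bit /upd eqxx.
have o1 : one B (sigf (col (upd regs1 j (fun z => z = v))) (th r) d (root t1)).
  apply/(one_iff B H1 (fun h => th_ge2 r h)); exists v; split; first exact: D_root.
  rewrite Bc; split; first exact/pbP.
  by move=> z' _; rewrite Bc => /pbP.
rewrite hG' in o1.
have [z' [_ [bz uz]]] := proj1 (one_iff B H2 (fun h => th_ge2 r h) _ _ _) o1.
exists z'; rewrite /G hG'; apply: sigf_local => z _.
rewrite /col; congr pair; apply/ffunP => i; rewrite !ffunE /upd.
case: eqP => // _; apply: pb_iff; split.
- move=> hx; apply: uz; first exact: D_root. rewrite Bc; exact/pbP.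
- move=> ->; move: bz; rewrite Bc; by move/pbP.
Qed.
End Moves.

Section Atoms.
Variables (t1 t2 : lstruct p).
Hypotheses (H1 : in_T d t1) (H2 : in_T d t2).
Variables (r : nat) (regs1 : nat -> V t1 -> Prop) (regs2 : nat -> V t2 -> Prop).
Variables (rho1 : nat -> V t1) (rho2 : nat -> V t2).
Hypothesis hG : G r regs1 regs2.

Definition tok s := match s with
  | TVar x => exists2 j, j < m & (forall z, regs1 j z <-> z = rho1 x) /\ (forall z, regs2 j z <-> z = rho2 x)
  | TRoot => True end.

Definition Corr k z1 z2 := reach t1 k (root t1) z1 /\ reach t2 k (root t2) z2 /\
  sigf (col regs1) (th r) (d - k) z1 = sigf (col regs2) (th r) (d - k) z2.

Lemma descent k z1 : k <= d -> reach t1 k (root t1) z1 -> exists z2, Corr k z1 z2.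
Proof.
elim: k z1 => [|k IH] z1 kd r1.
  rewrite -(reach0_eq r1); exists (root t2); split; [exact: reach0| split; [exact: reach0|]].
  by rewrite subn0.
have [y1 [ry1 e1]] := reach_last r1.
have [y2 [_ [ry2 sy]]] := IH _ (ltnW kd) ry1.
have ed : d - k = (d - k.+1).+1 by lia.
move: sy; rewrite ed => sy.
have [z2 [e2 sz]] := sigf_child (th_pos r _) sy e1.
exists z2; split => //; split; last by rewrite sz.
rewrite -addn1; apply: reach_trans ry2 (reach1 e2).
Qed.

Lemma corr_col k z1 z2 : Corr k z1 z2 -> col regs1 z1 = col regs2 z2.
Proof. move=> [_ [_ e]]; by rewrite -(sigcE (col regs1) (th r) (d - k) z1) e sigcE. Qed.

Lemma col_eq_bit z1 z2 j : j < m -> col regs1 z1 = col regs2 z2 -> (regs1 j z1 <-> regs2 j z2).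
Proof.
move=> jm e; have := congr1 (fun c : Kc => c.2 (Ordinal jm)) e; rewrite /= !col_bit.
move=> e'; split => h; [apply/pbP; rewrite -e'; exact/pbP | apply/pbP; rewrite e'; exact/pbP].
Qed.

Lemma corr_term s : tok s -> exists k, Corr k (teval rho1 s) (teval rho2 s).
Proof.
case: s => [x|] /=; last first.
  exists 0; split; [exact: reach0| split; [exact: reach0| by rewrite subn0]].
move=> [j jm [h1 h2]].
have [k kd rk] := depth_ex H1 (rho1 x).
have [z2 c] := descent kd rk.
have : regs2 j z2 by apply/(col_eq_bit jm (corr_col c)); apply/h1.
move=> /h2 ez; subst z2; by exists k.
Qed.

Lemma atomP s : tok s -> lab t1 (teval rho1 s) = lab t2 (teval rho2 s).
Proof. move=> /corr_term [k /corr_col e]; exact: (congr1 fst e). Qed.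

Lemma atomIn s j (S1 : V t1 -> Prop) (S2 : V t2 -> Prop) : tok s -> j < m ->
  (forall z, regs1 j z <-> S1 z) -> (forall z, regs2 j z <-> S2 z) ->
  S1 (teval rho1 s) -> S2 (teval rho2 s).
Proof.
move=> /corr_term [k /corr_col e] jm h1 h2 hs.
apply/h2; apply/(col_eq_bit jm e); exact/h1.
Qed.

Lemma atomEq s u : tok s -> tok u -> teval rho1 s = teval rho1 u -> teval rho2 s = teval rho2 u.
Proof.
case: s => [x|]; case: u => [y|] //=.
- move=> tx [j jm [h1 h2]] e.
  have [k c] := corr_term (s := TVar x) tx; move: c => /= c.
  have : regs2 j (rho2 x) by apply/(col_eq_bit jm (corr_col c)); apply/h1.
  by move=> /h2.
- move=> tx _ e; have [k [r1 [r2 _]]] := corr_term (s := TVar x) tx.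
  move: r1 r2 => /=; rewrite e => /(root_reach_self H1) k0; subst k.
  by move=> /reach0_eq.
- move=> _ ty e; have [k [r1 [r2 _]]] := corr_term (s := TVar y) ty.
  move: r1 r2 => /=; rewrite -e => /(root_reach_self H1) k0; subst k.
  by move=> /reach0_eq.
Qed.

Lemma atomE s u : tok s -> tok u -> E t1 (teval rho1 s) (teval rho1 u) -> E t2 (teval rho2 s) (teval rho2 u).
Proof.
move=> ts tu e1.
have [k [r1 [r2 sz]]] := corr_term ts.
have kd : k < d.
  have [k' kd' rk'] := depth_ex H1 (teval rho1 u).
  have := depth_uniq H1 rk' (reach_trans r1 (reach1 e1)); lia.
have ed : d - k = (d - k.+1).+1 by lia.
move: sz; rewrite ed => sz.
have [w' [e2 sw]] := sigf_child (th_pos r _) sz e1.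
case: u tu e1 sw => [y|] /=; last by move=> _ e1; case: H1 => [nr _]; case: (nr _ e1).
move=> [j jm [h1 h2]] _ sw.
have cw : col regs1 (rho1 y) = col regs2 w'.
  by rewrite -(sigcE (col regs1) (th r) (d - k.+1) (rho1 y)) -sw sigcE.
have : regs2 j w' by apply/(col_eq_bit jm cw); apply/h1.
by move=> /h2 <-.
Qed.
End Atoms.
End MSO.

Section Main.
Variables (p m d : nat).
Hypothesis p0 : 0 < p.
Variables (t1 t2 : lstruct p).
Hypotheses (H1 : in_T d t1) (H2 : in_T d t2).

Definition InvP r (regs1 : nat -> V t1 -> Prop) (regs2 : nat -> V t2 -> Prop) rho1 rho2 (piP : nat -> nat) (l : seq nat) :=
  forall x, x \in l -> piP x < m - r /\ (forall z, regs1 (piP x) z <-> z = rho1 x) /\ (forall z, regs2 (piP x) z <-> z = rho2 x).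
Definition InvS r (regs1 : nat -> V t1 -> Prop) (regs2 : nat -> V t2 -> Prop) (sig1 : nat -> V t1 -> Prop) (sig2 : nat -> V t2 -> Prop) (piS : nat -> nat) (l : seq nat) :=
  forall X, X \in l -> piS X < m - r /\ (forall z, regs1 (piS X) z <-> sig1 X z) /\ (forall z, regs2 (piS X) z <-> sig2 X z).

Lemma tok_of r regs1 regs2 rho1 rho2 piP s l :
  InvP r regs1 regs2 rho1 rho2 piP l -> (forall x, x \in tvars s -> x \in l) ->
  tok m regs1 regs2 rho1 rho2 s /\ tok m regs2 regs1 rho2 rho1 s.
Proof.
case: s => [x|] // hI hl; have [lt [h1 h2]] := hI x (hl x (mem_head _ _)).
split; exists (piP x) => //; lia.
Qed.

Lemma main (f : formula p) : forall r, qrank f <= r -> r <= m ->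
  forall regs1 regs2 rho1 rho2 sig1 sig2 piP piS,
  G m d r regs1 regs2 ->
  InvP r regs1 regs2 rho1 rho2 piP (fv1 f) ->
  InvS r regs1 regs2 sig1 sig2 piS (fvS f) ->
  (sat rho1 sig1 f <-> sat rho2 sig2 f).
Proof.
elim: f => [s u|s u|i s|s X|g IH|g1 IH1 g2 IH2|x g IH|X g IH] r qr rm regs1 regs2 rho1 rho2 sig1 sig2 piP piS hG hP hS /=.
- have hs : forall x, x \in tvars s -> x \in tvars s ++ tvars u by move=> x hx; rewrite mem_cat hx.
  have hu : forall x, x \in tvars u -> x \in tvars s ++ tvars u by move=> x hx; rewrite mem_cat hx orbT.
  have [ts1 ts2] := tok_of hP hs. have [tu1 tu2] := tok_of hP hu.
  split; [exact: (atomE p0 H1 hG ts1 tu1) | exact: (atomE p0 H2 (esym hG) ts2 tu2)].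
- have hs : forall x, x \in tvars s -> x \in tvars s ++ tvars u by move=> x hx; rewrite mem_cat hx.
  have hu : forall x, x \in tvars u -> x \in tvars s ++ tvars u by move=> x hx; rewrite mem_cat hx orbT.
  have [ts1 ts2] := tok_of hP hs. have [tu1 tu2] := tok_of hP hu.
  split; [exact: (atomEq p0 H1 hG ts1 tu1) | exact: (atomEq p0 H2 (esym hG) ts2 tu2)].
- have [ts1 ts2] := tok_of hP (fun x hx => hx).
  by rewrite (atomP p0 H1 hG ts1).
- have [ts1 ts2] := tok_of hP (fun x hx => hx).
  have [lt [h1 h2]] := hS X (mem_head _ _).
  have jm : piS X < m by lia.
  split; [exact: (atomIn p0 H1 hG ts1 jm h1 h2) | exact: (atomIn p0 H2 (esym hG) ts2 jm h2 h1)].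
- by rewrite (IH r qr rm regs1 regs2 rho1 rho2 sig1 sig2 piP piS hG hP hS).
- move: qr; rewrite geq_max => /andP [q1 q2].
  rewrite (IH1 r q1 rm regs1 regs2 rho1 rho2 sig1 sig2 piP piS hG); last 2 first.
    by move=> y hy; apply: hP; rewrite mem_cat hy.
    by move=> y hy; apply: hS; rewrite mem_cat hy.
  rewrite (IH2 r q2 rm regs1 regs2 rho1 rho2 sig1 sig2 piP piS hG) //.
    by move=> y hy; apply: hP; rewrite mem_cat hy orbT.
    by move=> y hy; apply: hS; rewrite mem_cat hy orbT.
- case: r qr rm hG hP hS => [|r] // qr rm hG hP hS.
  set j := m - r.+1.
  have jm : j < m by rewrite /j; lia.
  pose piP' := fun y => if y == x then j else piP y.
  have key : forall (v1 : V t1) (v2 : V t2),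
      G m d r (upd regs1 j (fun z => z = v1)) (upd regs2 j (fun z => z = v2)) ->
      (sat (fun y => if y == x then v1 else rho1 y) sig1 g <->
       sat (fun y => if y == x then v2 else rho2 y) sig2 g).
    move=> v1 v2 hG'; apply: (IH r qr (ltnW rm) _ _ _ _ _ _ piP' piS hG').
    + move=> y hy; rewrite /piP'; case: eqP => [e|ne].
      * split; first by rewrite /j; lia.
        by rewrite /upd eqxx.
      * have hy' : y \in fv1 (FEx1 x g) by rewrite /= mem_filter hy andbT; apply/eqP.
        have [lt [h1 h2]] := hP y hy'.
        have nj : (piP y == j) = false by apply/eqP; rewrite /j; lia.
        split; first by lia.
        have ny : (y == x) = false by apply/eqP.
        by rewrite /upd nj.
    + move=> Y hY; have [lt [h1 h2]] := hS Y hY.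
      have nj : (piS Y == j) = false by apply/eqP; rewrite /j; lia.
      split; first by lia.
      by rewrite /upd nj.
  split.
  + move=> [v hv]; have [v' hG'] := PM_top p0 H1 H2 jm hG v.
    exists v'; exact/(key _ _ hG').
  + move=> [v' hv]; have [v hG'] := PM_top p0 H2 H1 jm (esym hG) v'.
    exists v; exact/(key _ _ (esym hG')).
- case: r qr rm hG hP hS => [|r] // qr rm hG hP hS.
  set j := m - r.+1.
  have jm : j < m by rewrite /j; lia.
  pose piS' := fun Y => if Y == X then j else piS Y.
  have key : forall (S1 : V t1 -> Prop) (S2 : V t2 -> Prop),
      G m d r (upd regs1 j S1) (upd regs2 j S2) ->
      (sat rho1 (fun Y => if Y == X then S1 else sig1 Y) g <->
       sat rho2 (fun Y => if Y == X then S2 else sig2 Y) g).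
    move=> S1 S2 hG'; apply: (IH r qr (ltnW rm) _ _ _ _ _ _ piP piS' hG').
    + move=> y hy; have [lt [h1 h2]] := hP y hy.
      have nj : (piP y == j) = false by apply/eqP; rewrite /j; lia.
      split; first by lia.
      by rewrite /upd nj.
    + move=> Y hY; rewrite /piS'; case: eqP => [e|ne].
      * split; first by rewrite /j; lia.
        by rewrite /upd eqxx.
      * have hY' : Y \in fvS (FExS X g) by rewrite /= mem_filter hY andbT; apply/eqP.
        have [lt [h1 h2]] := hS Y hY'.
        have nj : (piS Y == j) = false by apply/eqP; rewrite /j; lia.
        split; first by lia.
        have ny : (Y == X) = false by apply/eqP.
        by rewrite /upd nj.
  split.
  + move=> [S1 hv]; have [S2 hG'] := SM_top p0 H2 j hG S1.
    exists S2; exact/(key _ _ hG').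
  + move=> [S2 hv]; have [S1 hG'] := SM_top p0 H1 j (esym hG) S2.
    exists S1; exact/(key _ _ (esym hG')).
Qed.
End Main.

Lemma In_flatten (T : Type) (w : T) (ss : seq (seq T)) :
  List.In w (flatten ss) <-> exists s, List.In s ss /\ List.In w s.
Proof.
elim: ss => [|s ss IH] /=; first by split => // [[s []]].
rewrite List.in_app_iff IH; split.
- case=> [h|[s' [h1 h2]]]; [exists s; auto | exists s'; auto].
- move=> [s' [[<-|h1] h2]]; [by left | right; exists s'; auto].
Qed.

Lemma size_flatten_le (I T : Type) (s : seq I) (f : I -> seq T) b :
  (forall x, List.In x s -> size (f x) <= b) -> size (flatten (map f s)) <= size s * b.
Proof.
elim: s => [|x s IH] h //=; rewrite size_cat mulSn leq_add //.
- apply: h; by left.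
- apply: IH => y hy; apply: h; by right.
Qed.

Lemma In_map (A B : Type) (f : A -> B) (l : seq A) y :
  List.In y (map f l) <-> exists x, f x = y /\ List.In x l.
Proof.
elim: l => [|x l IH] /=; first by split => // [[x []]].
rewrite IH; split.
- case=> [<-|[z [e h]]]; [exists x; auto | exists z; auto].
- move=> [z [e [ez|h]]]; [left; by rewrite ez | right; exists z; auto].
Qed.

Lemma sval_inj (T : Type) (P : pred T) (a b : {x | P x}) : sval a = sval b -> a = b.
Proof. case: a b => a pa [b pb0] /= e; subst b; congr exist; exact: bool_irrelevance. Qed.

Lemma In_pmap_insub (T : Type) (P : pred T) (l : seq T) (x : {y | P y}) :
  List.In (sval x) l -> List.In x (pmap (insub : T -> option {y | P y}) l).
Proof.
elim: l => [|a l IH] //= h; case: h => [e|h].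
- subst a; rewrite (insubT P (proj2_sig x)) /=; left; exact: sval_inj.
- case: insub => [y|] /=; [right|]; exact: IH.
Qed.

Lemma In_mem (T : eqType) (x : T) (s : seq T) : List.In x s <-> x \in s.
Proof.
elim: s => [|y s IH] //=; rewrite in_cons IH; split.
- case=> [->|h]; [by rewrite eqxx | by rewrite h orbT].
- case/orP => [/eqP ->|h]; [by left | by right].
Qed.

Lemma atleast_map (V1 V2 : Type) (f : V1 -> V2) (A : V1 -> Prop) (B : V2 -> Prop) n :
  injective f -> (forall z, B z <-> exists a, A a /\ f a = z) -> (atleast n A <-> atleast n B).
Proof.
move=> fi hB; split.
- move=> [e [ie Ae]]; exists (fun i => f (e i)); split.
  + by move=> i j /fi /ie.
  + move=> i; apply/hB; exists (e i); auto.
- move=> [e [ie Be]].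
  have ch : forall i, {a | A a /\ f a = e i}.
    move=> i; apply: constructive_indefinite_description; exact/hB.
  exists (fun i => sval (ch i)); split.
  + move=> i j h; apply: ie; rewrite -(proj2 (proj2_sig (ch i))) -(proj2 (proj2_sig (ch j))) h //.
  + move=> i; exact: (proj1 (proj2_sig (ch i))).
Qed.

Lemma tc_atleast_eq (V1 V2 : Type) (A : V1 -> Prop) (B : V2 -> Prop) k :
  (forall n, atleast n A <-> atleast n B) -> tc k A = tc k B.
Proof. move=> h; elim: k => [|k IH] //=; by rewrite (pb_iff (h k.+1)) IH. Qed.

Section Prune.
Variables (p m d : nat).
Hypothesis p0 : 0 < p.
Variable t : lstruct p.
Hypothesis Ht : in_T d t.

Definition c0 := @col p m t (fun _ _ => False).
Definition thm := th p m m.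
Definition sg h := sigf c0 thm h.

Lemma sel_ex h v : exists l : seq (V t), (forall w, List.In w l -> E t v w) /\
  size l <= #|SigT (Kc p m) thm h| * thm h /\
  forall τ, tc (thm h) (fun w => List.In w l /\ sg h w = τ) = tc (thm h) (fun w => E t v w /\ sg h w = τ).
Proof.
pose A τ := fun w => E t v w /\ sg h w = τ.
pose F τ := proj1_sig (constructive_indefinite_description _ (tc_atleast (thm h) (A τ))).
have hF : forall τ, injective (F τ) /\ forall i, A τ (F τ i).
  move=> τ; exact: (proj2_sig (constructive_indefinite_description _ (tc_atleast (thm h) (A τ)))).
pose l := flatten [seq map (F τ) (enum 'I_(tc (thm h) (A τ))) | τ <- enum (SigT (Kc p m) thm h)].
have inl : forall w, List.In w l <-> exists τ i, F τ i = w.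
  move=> w; rewrite In_flatten; split.
  - move=> [s [/In_map [τ [<- _]] /In_map [i [<- _]]]]; by exists τ, i.
  - move=> [τ [i <-]]; exists (map (F τ) (enum 'I_(tc (thm h) (A τ)))); split.
    + apply/In_map; exists τ; split => //; apply/In_mem; exact: mem_enum.
    + apply/In_map; exists i; split => //; apply/In_mem; exact: mem_enum.
exists l; split; [|split].
- move=> w /inl [τ [i <-]]; exact: (proj1 ((hF τ).2 i)).
- rewrite /l; apply: leq_trans (size_flatten_le (b := thm h) _) _.
    move=> τ _; rewrite size_map size_enum_ord; exact: tc_le.
  by rewrite -cardT.
- move=> τ.
  rewrite (tc_img (thm h) (J := predT) (e := F τ) (A := fun w => List.In w l /\ sg h w = τ) (proj1 (hF τ))).
    rewrite card_ord; apply/minn_idPr; exact: tc_le.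
  move=> w; split.
  + move=> [/inl [τ' [i <-]] e]; have [_ s'] := (hF τ').2 i.
    rewrite s' in e; subst τ; by exists i.
  + move=> [i _ <-]; split; [apply/inl; by exists τ, i | exact: (proj2 ((hF τ).2 i))].
Qed.

Definition sel h v := proj1_sig (constructive_indefinite_description _ (sel_ex h v)).
Lemma sel_E h v w : List.In w (sel h v) -> E t v w.
Proof. exact: (proj1 (proj2_sig (constructive_indefinite_description _ (sel_ex h v)))). Qed.
Lemma sel_size h v : size (sel h v) <= #|SigT (Kc p m) thm h| * thm h.
Proof. exact: (proj1 (proj2 (proj2_sig (constructive_indefinite_description _ (sel_ex h v))))). Qed.
Lemma sel_tc h v τ : tc (thm h) (fun w => List.In w (sel h v) /\ sg h w = τ) = tc (thm h) (fun w => E t v w /\ sg h w = τ).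
Proof. exact: (proj2 (proj2 (proj2_sig (constructive_indefinite_description _ (sel_ex h v)))) τ). Qed.

Fixpoint keptk k w : Prop :=
  if k is k'.+1 then exists v, keptk k' v /\ List.In w (sel (d - k'.+1) v) else w = root t.
Definition kept w := exists k, keptk k w.

Lemma keptk_reach k w : keptk k w -> reach t k (root t) w.
Proof.
elim: k w => [|k IH] w /=; first by move=> ->; exact: reach0.
move=> [v [kv iw]]; rewrite -addn1; exact: reach_trans (IH _ kv) (reach1 (sel_E iw)).
Qed.

Lemma keptk_le k w : keptk k w -> k <= d.
Proof. move=> /keptk_reach r; have [k' kd r'] := depth_ex Ht w; by rewrite (depth_uniq Ht r r'). Qed.

Definition kb w := pb (kept w).
Definition Vp := {w : V t | kb w}.
Lemma root_kb : kb (root t).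
Proof. apply/pbP; by exists 0. Qed.
Definition tp : lstruct p := @LStruct p Vp (fun a b => E t (sval a) (sval b)) (exist _ (root t) root_kb) (fun a => lab t (sval a)).

Lemma kb_kept (w : Vp) : kept (sval w).
Proof. exact/pbP/(proj2_sig w). Qed.

Lemma reach_val k (a b : Vp) : reach tp k a b -> reach t k (sval a) (sval b).
Proof. elim=> [u|k' u w v e _ IH]; [exact: reach0 | apply: (reachS (w := sval w)) IH; exact: e]. Qed.

Lemma keptk_lift k w (pf : kb w) : keptk k w -> reach tp k (root tp) (exist _ w pf).
Proof.
elim: k w pf => [|k IH] w pf /=.
  move=> e; subst w; have -> : exist _ (root t) pf = root tp by apply: sval_inj.
  exact: reach0.
move=> [v [kv iw]]; have pfv : kb v by apply/pbP; exists k.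
rewrite -addn1; apply: reach_trans (IH _ pfv kv) _.
apply: (reach1 (t := tp) (u := exist _ v pfv) (z := exist _ w pf)); exact: sel_E iw.
Qed.

Lemma tp_in_T : in_T d tp.
Proof.
case: (Ht) => [nr [pu dp]]; split; [|split].
- move=> v /=; exact: nr.
- move=> v nv; have [[|k] hk] := kb_kept v.
    by case: nv; apply: sval_inj.
  move: hk => [u [ku iu]]; have pfu : kb u by apply/pbP; exists k.
  exists (exist _ u pfu); split; first exact: sel_E iu.
  move=> u' e'; apply: sval_inj => /=; exact: (parent_uniq Ht (e' : E t (sval u') (sval v)) (sel_E iu)).
- case=> w pf; have [k hk] := kb_kept (exist _ w pf).
  exists k; split; [exact: keptk_le hk | exact: keptk_lift].
Qed.

Lemma sig_tp h : forall k (w : Vp), keptk k (sval w) -> d - k = h ->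
  sigf (@col p m tp (fun _ _ => False)) thm h w = sg h (sval w).
Proof.
elim: h => [|h IH] k w kw dk; first by [].
apply: sigf_eqS => // τ.
have ek : d - k.+1 = h by lia.
rewrite /sg -/(sg h) -sel_tc.
apply: tc_atleast_eq => n; apply: (atleast_map (f := @sval _ _)); first by move=> a b; exact: sval_inj.
move=> z; split.
- move=> [iz sz]; have pf : kb z by apply/pbP; exists k.+1, (sval w); rewrite ek.
  exists (exist _ z pf); split => //; split; first exact: sel_E iz.
  rewrite (IH k.+1) //=; last by exists (sval w); rewrite ek.
- move=> [z' [[e0 sz] <-]]; have [k2 hk2] := kb_kept z'.
  have e : E t (sval w) (sval z') := e0.
  have r1 := reach_trans (keptk_reach kw) (reach1 e).
  have e2 := depth_uniq Ht (keptk_reach hk2) r1; rewrite addn1 in e2; subst k2.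
  move: hk2 => /= [v [kv iv]].
  have ev := parent_uniq Ht (sel_E iv) e; subst v.
  split; first by rewrite -ek.
  rewrite -(IH k.+1) //=; by exists (sval w).
Qed.

Lemma G_tp : G m d m (fun (_ : nat) (_ : V tp) => False) (fun (_ : nat) (_ : V t) => False).
Proof. rewrite /G; apply: (sig_tp (k := 0)) => /=; [done | exact: subn0]. Qed.

Lemma tp_leaf (x : Vp) : (forall y, ~ E tp x y) -> forall z, ~ E t (sval x) z.
Proof.
move=> hx z e; have [k kx] := kb_kept x.
have kd : k < d.
  have [k' kd' rk'] := depth_ex Ht z.
  have := depth_uniq Ht rk' (reach_trans (keptk_reach kx) (reach1 e)); lia.
pose h := d - k.+1.
have : 0 < tc (thm h) (fun w => E t (sval x) w /\ sg h w = sg h z).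
  apply: tc_ge; first exact: th_pos.
  exists (fun _ => z); split => // i j _; by rewrite (ord1 i) (ord1 j).
rewrite -sel_tc => /tc_pos_ex [y [iy _]].
have pf : kb y by apply/pbP; exists k.+1, (sval x).
exact: (hx (exist _ y pf) (sel_E iy)).
Qed.

Lemma descent_keep k z : reach t k (root t) z -> exists z', keptk k z' /\ sg (d - k) z' = sg (d - k) z.
Proof.
elim: k z => [|k IH] z r.
  rewrite -(reach0_eq r); by exists (root t).
have [y [ry e]] := reach_last r.
have [y' [ky sy]] := IH _ ry.
have kd : k < d.
  have [k' kd' rk'] := depth_ex Ht z.
  have := depth_uniq Ht rk' r; lia.
have ed : d - k = (d - k.+1).+1 by lia.
move: sy; rewrite ed => /sigf_eqS_inv [_ hc].
pose h := d - k.+1.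
have : 0 < tc (thm h) (fun w => E t y w /\ sg h w = sg h z).
  apply: tc_ge; first exact: th_pos.
  exists (fun _ => z); split => // i j _; by rewrite (ord1 i) (ord1 j).
rewrite -[X in _ < X]hc -sel_tc => /tc_pos_ex [z' [iz sz]].
exists z'; split => //; by exists y'.
Qed.

Lemma tp_depth k : (exists v : Vp, reach tp k (root tp) v) <-> (exists v, reach t k (root t) v).
Proof.
split; first by move=> [v /reach_val r]; exists (sval v).
move=> [z /descent_keep [z' [kz _]]].
have pf : kb z' by apply/pbP; exists k.
exists (exist _ z' pf); exact: keptk_lift.
Qed.

Lemma tp_height h : has_height tp h <-> has_height t h.
Proof.
split.
- move=> [/tp_depth ex hk]; split => // k v rv.
  have [v' rv'] := proj2 (tp_depth k) (ex_intro _ v rv); exact: hk rv'.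
- move=> [/tp_depth ex hk]; split => // k v /reach_val rv; exact: hk rv.
Qed.

Fixpoint Lk k : seq (V t) := if k is k'.+1 then flatten (map (sel (d - k'.+1)) (Lk k')) else [:: root t].

Lemma Lk_in k w : keptk k w -> List.In w (Lk k).
Proof.
elim: k w => [|k IH] w /=; first by move=> ->; left.
move=> [v [kv iw]]; apply/In_flatten; exists (sel (d - k.+1) v); split => //.
apply/In_map; exists v; split => //; exact: IH.
Qed.

Lemma Lk_size A k : (forall h v, h < d -> size (sel h v) <= A) -> k <= d -> size (Lk k) <= A ^ k.
Proof.
move=> hA; elim: k => [|k IH] //= kd.
apply: leq_trans (size_flatten_le (b := A) _) _; first by move=> x _; apply: hA; lia.
by rewrite expnSr leq_mul2r IH ?orbT //; lia.
Qed.

Lemma card_tp A : 0 < A -> (forall h v, h < d -> size (sel h v) <= A) -> card_le tp (d.+1 * A ^ d).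
Proof.
move=> A0 hA.
pose Lall := flatten (map Lk (iota 0 d.+1)).
exists (pmap (insub : V t -> option Vp) Lall); split.
- rewrite size_pmap; apply: leq_trans (count_size _ _) _.
  apply: leq_trans (size_flatten_le (b := A ^ d) _) _.
    move=> k /In_mem; rewrite mem_iota add0n ltnS => kd.
    apply: leq_trans (Lk_size hA kd) _; by rewrite leq_pexp2l.
  by rewrite size_iota.
- move=> v; apply: In_pmap_insub; have [k hk] := kb_kept v.
  apply/In_flatten; exists (Lk k); split; last exact: Lk_in.
  apply/In_map; exists k; split => //; apply/In_mem.
  rewrite mem_iota add0n ltnS; exact: keptk_le hk.
Qed.

End Prune.

Lemma tower_mono k x y : x <= y -> tower k x <= tower k y.
Proof. elim: k => [|k IH] //= xy; rewrite leq_exp2l //; exact: IH. Qed.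

Lemma tower_ge k x : x <= tower k x.
Proof. elim: k => [|k IH] //=; apply: leq_trans IH (ltnW (ltn_expl _ _)) => //. Qed.

Lemma exp_K K : 0 < K -> K <= 2 ^ K.-1.
Proof. case: K => // K _ /=; exact: ltn_expl. Qed.

Lemma tower_mul k K X : 0 < K -> 0 < X -> K * tower k X <= tower k (K * X).
Proof.
move=> K0 X0; elim: k => [|k IH] //=.
have t0 : 0 < tower k X by apply: leq_trans X0 (tower_ge _ _).
apply: (@leq_trans (2 ^ (K * tower k X))); last by rewrite leq_exp2l.
have e : K * tower k X = tower k X + K.-1 * tower k X by case: (K) K0 => // K' _; rewrite mulSn.
rewrite e expnD mulnC leq_mul2l; apply/orP; right.
apply: leq_trans (exp_K K0) _; rewrite leq_exp2l //; case: (K) => // K'; rewrite /=.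
by rewrite leq_pmulr.
Qed.

Lemma sq_bound x : 0 < x -> x + 2 + x * x <= 2 ^ (2 * x).
Proof.
elim: x => // x IH _; case: x IH => [|x] IH //.
have h := IH isT.
have h2 : x.+1 < 2 ^ (2 * x.+1) by apply: (leq_trans (ltn_expl x.+1 (isT : 1 < 2))); rewrite leq_exp2l //; lia.
rewrite [2 * x.+2]mulnS expnD.
move: h h2; set y := 2 ^ (2 * x.+1); rewrite (_ : 2 ^ 2 = 4) //; nia.
Qed.

Section Bounds.
Variables (p m : nat).
Hypothesis p0 : 0 < p.
Hypothesis m0 : 0 < m.
Definition Mp := m + up_log 2 p.
Fixpoint bb h := if h is h'.+1 then Mp + (2 + m * bb h') * 2 ^ (bb h') else Mp.

Lemma cardKc : #|Kc p m| <= 2 ^ Mp.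
Proof.
rewrite /Kc card_prod card_ffun !card_ord card_bool /Mp expnD mulnC leq_mul2l.
apply/orP; right; exact: up_logP.
Qed.

Lemma th_bound_of h B : (forall r, r <= m -> #|SigT (Kc p m) (th p m r) h| <= 2 ^ B) ->
  forall r, r <= m -> th p m r h <= 2 ^ (1 + r * B).
Proof.
move=> hS; elim=> [|r IH] rm //=.
rewrite mulSn addnCA expnD; apply: leq_mul; [exact: hS (ltnW rm) | exact: IH (ltnW rm)].
Qed.

Lemma SigT_bound h : forall r, r <= m -> #|SigT (Kc p m) (th p m r) h| <= 2 ^ bb h.
Proof.
elim: h => [|h IH] r rm; first exact: cardKc.
rewrite card_SigT /= expnD; apply: leq_mul; first exact: cardKc.
have ht := th_bound_of IH rm.
have h1 : (th p m r h).+1 <= 2 ^ (2 + m * bb h).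
  apply: (@leq_trans (2 ^ (2 + r * bb h))); last by rewrite leq_exp2l // leq_add2l leq_mul2r rm orbT.
  rewrite (_ : 2 + r * bb h = (1 + r * bb h).+1) // expnS.
  have : 0 < 2 ^ (1 + r * bb h) by rewrite expn_gt0.
  move: ht; set z := 2 ^ _; lia.
rewrite expnM.
apply: (@leq_trans ((2 ^ (2 + m * bb h)) ^ #|SigT (Kc p m) (th p m r) h|)).
  rewrite leq_exp2r //; apply: card_SigT_pos; exact: cardK.
apply: leq_pexp2l; [by rewrite expn_gt0 | exact: IH].
Qed.

Lemma Mp_ge : m <= Mp.
Proof. exact: leq_addr. Qed.

Lemma bb_ge h : Mp <= bb h.
Proof. case: h => [|h] //=; exact: leq_addr. Qed.

Lemma bb_step h : bb h.+1 <= 2 ^ (3 * bb h).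
Proof.
rewrite /=; set x := bb h.
have X1 : Mp <= x := bb_ge h.
have mx : m <= x := leq_trans Mp_ge X1.
have x0 : 0 < x by apply: leq_trans m0 mx.
have sq := sq_bound x0.
have z1 : 0 < 2 ^ x by rewrite expn_gt0.
have xz : x < 2 ^ x := ltn_expl _ (isT : 1 < 2).
rewrite (_ : 3 * x = 2 * x + x); last lia.
rewrite expnD.
apply: (@leq_trans ((x + 2 + x * x) * 2 ^ x)); last by rewrite leq_mul2r sq orbT.
rewrite !mulnDl; rewrite -addnA leq_add //.
- apply: leq_trans X1 _; by rewrite leq_pmulr.
- rewrite leq_add2l leq_mul2r; apply/orP; right; by rewrite leq_mul2r mx orbT.
Qed.

Lemma bb_tower h : bb h <= tower h (3 ^ h * Mp).
Proof.
elim: h => [|h IH]; first by rewrite /= mul1n.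
apply: leq_trans (bb_step h) _; rewrite /= leq_exp2l //.
apply: leq_trans (_ : 3 * tower h (3 ^ h * Mp) <= _).
  by rewrite leq_mul2l IH orbT.
rewrite expnS -mulnA; apply: tower_mul => //.
rewrite muln_gt0 expn_gt0 /=; apply: leq_trans m0 Mp_ge.
Qed.

Lemma bb_mono h h' : h <= h' -> bb h <= bb h'.
Proof.
move/subnK => <-; elim: (h' - h) => [|k IH] //=.
apply: leq_trans IH _; rewrite addSn /=; set x := bb (k + h).
apply: leq_trans (ltnW (ltn_expl x (isT : 1 < 2))) _.
apply: leq_trans (leq_addl Mp _); apply: leq_pmull; lia.
Qed.


Lemma Mp_pos : 0 < Mp.
Proof. apply: leq_trans m0 Mp_ge. Qed.

Lemma index_bound d : #|SigT (Kc p m) (th p m m) d| <= tower d.+1 (3 ^ d * (d + 3) * m.+1 * Mp).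
Proof.
apply: leq_trans (SigT_bound d (leqnn m)) _.
rewrite /= leq_exp2l //; apply: leq_trans (bb_tower d) _; apply: tower_mono.
have := Mp_pos; set y := 3 ^ d; set z := Mp; nia.
Qed.

Lemma card_bound d : d.+1 * (2 ^ (1 + m.+1 * bb d.-1)) ^ d <= tower d (3 ^ d * (d + 3) * m.+1 * Mp).
Proof.
have Mp0 := Mp_pos.
case: d => [|d] /=.
  rewrite expn0 muln1 /=; have : 0 < 3 * m.+1 * Mp by rewrite !muln_gt0 Mp0.
  rewrite expn0 mul1n; lia.
rewrite -expnM.
have hd : d.+2 <= 2 ^ d.+1 by exact: ltn_expl.
apply: (@leq_trans (2 ^ (d.+1 + (1 + m.+1 * bb d) * d.+1))).
  rewrite expnD leq_mul2r hd orbT //.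
case: d hd => [|d] _.
  rewrite leq_exp2l // muln1 /= expn1.
  have : 0 < m.+1 * Mp by rewrite muln_gt0 Mp0.
  rewrite (_ : 3 * (1 + 3) * m.+1 * Mp = 12 * (m.+1 * Mp)); last by rewrite !mulnA.
  set z := m.+1 * Mp; lia.
rewrite leq_exp2l //.
set y := tower d (3 ^ d.+1 * Mp).
have hb : bb d.+1 <= 2 ^ y by apply: leq_trans (bb_tower _) _.
have my : m <= y.
  apply: leq_trans Mp_ge _; apply: leq_trans (tower_ge d _); apply: leq_pmull; by rewrite expn_gt0.
have y0 : 0 < y by apply: leq_trans m0 my.
have m1 : m.+1 <= 2 ^ y by apply: leq_trans (ltn_expl m (isT : 1 < 2)) _; rewrite leq_exp2l.
have pm := leq_mul m1 hb.
have E1 : d.+2 + (1 + m.+1 * bb d.+1) * d.+2 <= d.+2 * (2 + 2 ^ y * 2 ^ y).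
  have := leq_mul (leqnn d.+2) pm; move: pm.
  set P := m.+1 * bb d.+1; set Q := 2 ^ y * 2 ^ y; nia.
have E2 : 2 + 2 ^ y * 2 ^ y <= 2 ^ (2 * y).+1.
  rewrite -expnD addnn -mul2n expnS.
  have : 2 <= 2 ^ (2 * y) by rewrite (_ : 2 = 2 ^ 1) // leq_exp2l //; lia.
  set Q := 2 ^ (2 * y); lia.
have E3 : d.+2 <= 2 ^ d.+1 by exact: ltn_expl.
apply: leq_trans E1 _.
apply: (@leq_trans (2 ^ d.+1 * 2 ^ (2 * y).+1)); first exact: leq_mul.
rewrite [tower d.+1 _]/= -expnD leq_exp2l //.
apply: (@leq_trans ((d + 4) * y)); first by nia.
apply: leq_trans (tower_mul _ _ _) _; [lia | by rewrite muln_gt0 expn_gt0 |].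
apply: tower_mono.
rewrite (expnS 3 d.+1); set z := 3 ^ d.+1.
have z0 : 0 < z by rewrite expn_gt0.
have e : 3 * z * (d.+2 + 3) * m.+1 * Mp = (z * Mp) * (3 * (d.+2 + 3) * m.+1) by nia.
rewrite e mulnC leq_mul2l; apply/orP; right; nia.
Qed.
End Bounds.

Lemma equiv_of_G p m d (p0 : 0 < p) (t1 t2 : lstruct p) : in_T d t1 -> in_T d t2 ->
  G m d m (fun (_ : nat) (_ : V t1) => False) (fun (_ : nat) (_ : V t2) => False) -> mso_equiv m t1 t2.
Proof.
move=> H1 H2 hG f [f1 fS] q; rewrite /models.
apply: (@main p m d p0 t1 t2 H1 H2 f m q (leqnn m) _ _ _ _ _ _ id id hG).
- by move=> x; rewrite f1.
- by move=> x; rewrite fS.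
Qed.

Lemma card_le_mono p (t : lstruct p) N N' : card_le t N -> N <= N' -> card_le t N'.
Proof. move=> [l [sl hl]] le; exists l; split => //; exact: leq_trans le. Qed.

Lemma p_pos d p (t : lstruct p) : in_T d t -> 0 < p.
Proof. move=> _; exact: leq_ltn_trans (leq0n _) (ltn_ord (lab t (root t))). Qed.

Definition unit_tree p (i : 'I_p) : lstruct p := @LStruct p unit (fun _ _ => False) tt (fun _ => i).

Lemma unit_tree_in_T p (i : 'I_p) : in_T 0 (unit_tree i).
Proof.
split; first by move=> v.
split.
- by move=> [] h; case: h.
- move=> []; exists 0; split => //; exact: reach0.
Qed.

Theorem theorem8 (d p : nat) :
  exists g : nat -> nat, (forall a b, a < b -> g a < g b) /\
  forall m : nat, 0 < m ->
    (forall t : lstruct p, @in_T d p t ->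
       exists t' : lstruct p,
         @in_T d p t' /\ leaf_hereditary_subtree t' t /\
         (forall h, has_height t' h <-> has_height t h) /\
         card_le t' (zeta g d p m d) /\
         mso_equiv m t' t) /\
    (if 1 <= d then index_le m d p (zeta g d p m d.+1)
     else index_le m d p p /\ index_ge m d p p).
Proof.
exists (fun d => 3 ^ d * (d + 3)); split.
  move=> a b ab; apply: (@leq_trans (3 ^ a * (b + 3))).
    by rewrite ltn_pmul2l ?expn_gt0 // ltn_add2r.
  by rewrite leq_mul2r leq_pexp2l ?orbT // ltnW.
move=> m m0; split.
- move=> t Ht; have p0 := p_pos Ht.
  exists (tp m d t); split; first exact: tp_in_T.
  split.
    exists (@sval _ _); split; first by move=> x y; exact: sval_inj.
    split; first by move=> x y; split.
    split; first by [].
    split; first by [].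
    move=> x hx; exact: (tp_leaf p0 Ht hx).
  split; first exact: tp_height.
  split.
    apply: card_le_mono (card_tp (A := 2 ^ (1 + m.+1 * bb p m d.-1)) p0 Ht _ _) _.
    + by rewrite expn_gt0.
    + move=> h v hd; apply: leq_trans (sel_size m h v) _.
      apply: (@leq_trans (2 ^ bb p m h * 2 ^ (1 + m * bb p m h))).
        apply: leq_mul; first exact: (SigT_bound p0 m0 h (leqnn m)).
        apply: th_bound_of => //; move=> r rm; exact: (SigT_bound p0 m0 h rm).
      rewrite -expnD leq_exp2l // addnCA -mulSn leq_add2l leq_mul2l; apply/orP; right.
      apply: bb_mono; lia.
    + exact: card_bound.
  exact: (@equiv_of_G p m d p0 (tp m d t) t (tp_in_T m Ht) Ht (G_tp m p0 Ht)).
- case: ifP => d1.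
  + move=> f hf; have p0 := p_pos (hf ord0).
    pose key i := sigf (@col p m (f i) (fun _ _ => False)) (th p m m) d (root (f i)).
    have : ~~ injectiveb key.
      apply/negP => /injectiveP inj; have := leq_card _ inj.
      rewrite card_ord; apply/negP; rewrite -ltnNge ltnS.
      apply: leq_trans (index_bound p0 m0 d) _; exact: leqnn.
    move=> /injectivePn [i [j ij e]]; exists i, j; split => //.
    apply: equiv_of_G => //; exact: e.
  + have d0 : d = 0 by lia. subst d; split.
    * move=> f hf; have p0 := p_pos (hf ord0).
      pose key i := lab (f i) (root (f i)).
      have : ~~ injectiveb key.
        apply/negP => /injectiveP inj; have := leq_card _ inj.
        by rewrite !card_ord ltnn.
      move=> /injectivePn [i [j ij e]]; exists i, j; split => //.
      apply: equiv_of_G => //; rewrite /G /= /col; congr pair; exact: e.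
    * exists (fun i => unit_tree i); split; first by move=> i; exact: unit_tree_in_T.
      move=> i j ij heq.
      have := heq (FP i TRoot) (conj erefl erefl) (leq0n _).
      rewrite /models /= => -[h _]; have := h erefl; move=> e; by rewrite e eqxx in ij.
Qed.
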